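(* Let $\Omega$ be a finite set of $n$ items, let $k,l\ge 1$ be integers, and let $f_1,\dots,f_m:2^\Omega\to\mathbb{R}_{\ge 0}$ be submodular (not necessarily monotone) functions. Then the algorithm $\textsf{Sampling-Greedy}$ returns a random set $S\subseteq\Omega$ with $|S|\le l$ such that $$\mathbb{E}_S[F(S)]\;\ge\;\frac{1}{2e}\,F(O),$$ where $O\in\arg\max_{S'\subseteq\Omega,\ |S'|\le l}F(S')$.
   Context: Define $F(S)=\sum_{i=1}^m\max_{A\subseteq S,\ |A|\le k} f_i(A)$. Submodularity of $f_i$: $f_i(A\cup\{x\})-f_i(A)\ge f_i(A'\cup\{x\})-f_i(A')$ for $A\subseteq A'$, $x\notin A'$. Notation: add a set $\Phi$ of $l$ dummy items and let $\Omega'=\Omega\cup\Phi$; extend each $f_i$ by $f_i(A)=f_i(A\cap\Omega)$ for $A\subseteq\Omega'$. Let $\Delta_i(x,A)=f_i(A\cup\{x\})-f_i(A)$; for $y\in A$, $\nabla_i(x,y,A)=f_i((A\setminus\{y\})\cup\{x\})-f_i(A)$; for $|A|\le k$: $\nabla_i(x,A)=0$ if $x\in A$; $\nabla_i(x,A)=\max\{0,\max_{y\in A}\nabla_i(x,y,A),\Delta_i(x,A)\}$ if $x\notin A$, $|A|<k$; $\nabla_i(x,A)=\max\{0,\max_{y\in A}\nabla_i(x,y,A)\}$ if $x\notin A$, $|A|=k$. Define $\textsf{Rep}_i(x,A)$ to be $\emptyset$ if $\nabla_i(x,A)=0$, or if $\nabla_i(x,A)>0$, $|A|<k$ and $\max_{y\in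 A}\nabla_i(x,y,A)<\Delta_i(x,A)$; otherwise (i.e. $\nabla_i(x,A)>0$ and either $|A|=k$, or $|A|<k$ and $\max_{y\in A}\nabla_i(x,y,A)\ge\Delta_i(x,A)$) it is $\{y^*\}$ for some $y^*\in\arg\max_{y\in A}\nabla_i(x,y,A)$. $\textsf{Trim}(B,f_i)$: start with $A\leftarrow B$, go once through the elements of $B$ in a fixed order and remove an element $x$ currently in $A$ whenever $f_i(A)-f_i(A\setminus\{x\})<0$; return $A$. $\textsf{Sampling-Greedy}$: initialize $S\leftarrow\emptyset$ and $T_i\leftarrow\emptyset$ for all $i\in[m]$. Repeat $l$ times: let $M$ be a set of exactly $l$ items of $\Omega'$ maximizing $\sum_{x\in M}\sum_{i=1}^m\nabla_i(x,T_i)$; pick $x^*$ uniformly at random from $M$ and set $S\leftarrow S\cup\{x^*\}$; for each $i\in[m]$ with $\nabla_i(x^*,T_i)>0$, set $T_i\leftarrow (T_i\setminus\textsf{Rep}_i(x^*,T_i))\cup\{x^*\}$ and then $T_i\leftarrow\textsf{Trim}(T_i,f_i)$. Finally output $S$ with dummy items removed (i.e. $S\cap\Omega$). *)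

(* Defs.v *)
From HB Require Import structures.
From mathcomp Require Import all_boot all_order all_algebra.
From mathcomp Require Import reals sequences exp.
Set Implicit Arguments. Unset Strict Implicit. Unset Printing Implicit Defensive.
Import Order.TTheory GRing.Theory Num.Theory.
Local Open Scope ring_scope.

(* Setting: ground set Omega = finType T, values in R : realType.
   Omega' = T + 'I_l  (the l dummy items are inr i). *)

Section SamplingGreedy.
Variable R : realType.
Variable T : finType.

Definition submodular (f : {set T} -> R) : Prop :=
  forall (A A' : {set T}) (x : T), A \subset A' -> x \notin A' ->
    f (x |: A') - f A' <= f (x |: A) - f A.

Definition nonneg_fun (f : {set T} -> R) : Prop := forall A, 0 <= f A.

(* F(S) = sum_i max_{A subset S, |A| <= k} f_i(A) (values are >= 0, and the
   empty set is always a candidate, so 0 is a harmless identity for max) *)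
Definition Fobj (m k : nat) (f : 'I_m -> {set T} -> R) (S : {set T}) : R :=
  \sum_(i < m) \big[Num.max/0]_(A : {set T} | (A \subset S) && (#|A| <= k)%N) f i A.

Variable l : nat.
Definition Tp : finType := (T + 'I_l)%type.

Definition ext (f : {set T} -> R) (A : {set Tp}) : R := f [set x : T | inl x \in A].

Section OneFunction.
Variable g : {set Tp} -> R.
Variable k : nat.

Definition Delta (x : Tp) (A : {set Tp}) : R := g (x |: A) - g A.
Definition nablaxy (x y : Tp) (A : {set Tp}) : R := g (x |: (A :\ y)) - g A.

(* nabla(x, A); sets with |A| >= k are treated as in the case |A| = k *)
Definition nabla (x : Tp) (A : {set Tp}) : R :=
  if x \in A then 0
  else if (#|A| < k)%N
       then Num.max (\big[Num.max/0]_(y in A) nablaxy x y A) (Delta x A)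
       else \big[Num.max/0]_(y in A) nablaxy x y A.

(* Rep_i(x,A) is nonempty iff nabla > 0 and (|A| = k, or max_y nabla(x,y,A) >= Delta) *)
Definition rep_cond (x : Tp) (A : {set Tp}) : bool :=
  (0 < nabla x A) && ((k <= #|A|)%N || [exists y in A, Delta x A <= nablaxy x y A]).

Definition trim (ord : seq Tp) (B : {set Tp}) : {set Tp} :=
  foldl (fun (A : {set Tp}) (x : Tp) => if (x \in A) && (g A - g (A :\ x) < 0) then A :\ x else A)
        B [seq x <- ord | x \in B].
End OneFunction.

Variables (m k : nat) (f : 'I_m -> {set T} -> R) (ord : seq Tp).
(* tie-breaking choices: [selM h] is the set M chosen after history h of picks;
   [selY h i] is the chosen y* in Rep_i when the last pick of h was x*. *)
Variables (selM : seq Tp -> {set Tp}) (selY : seq Tp -> 'I_m -> Tp).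

Definition stepT (h : seq Tp) (x : Tp) (Ts : 'I_m -> {set Tp}) : 'I_m -> {set Tp} :=
  fun i => let gi := ext (f i) in let A := Ts i in
    if 0 < nabla gi k x A then
      let rep := if rep_cond gi k x A then [set selY h i] else set0 in
      trim gi ord (x |: (A :\: rep))
    else A.

Fixpoint run (hd : seq Tp) (Ts : 'I_m -> {set Tp}) (rest : seq Tp) : 'I_m -> {set Tp} :=
  if rest is x :: r then let h' := rcons hd x in run h' (stepT h' x Ts) r else Ts.

Definition Tstate (h : seq Tp) : 'I_m -> {set Tp} := run [::] (fun _ => set0) h.

Definition gain (h : seq Tp) (M : {set Tp}) : R :=
  \sum_(x in M) \sum_(i < m) nabla (ext (f i)) k x (Tstate h i).

Definition valid_selM : Prop :=
  forall h, #|selM h| = l /\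
    forall M : {set Tp}, #|M| = l -> gain h M <= gain h (selM h).

Definition valid_selY : Prop :=
  forall h x (i : 'I_m), let gi := ext (f i) in let A := Tstate h i in
    rep_cond gi k x A ->
    selY (rcons h x) i \in A /\
    forall y, y \in A -> nablaxy gi x y A <= nablaxy gi x (selY (rcons h x) i) A.

Definition outset (h : seq Tp) : {set T} := [set x : T | inl x \in h].

(* expected value of F(output) when t rounds remain after picks h,
   x* uniform over selM h *)
Fixpoint Eval (t : nat) (h : seq Tp) : R :=
  if t is t'.+1 then (l%:R)^-1 * \sum_(x in selM h) Eval t' (rcons h x)
  else Fobj k f (outset h).

Definition reachable (h : seq Tp) : Prop :=
  forall h1 x h2, h = h1 ++ x :: h2 -> x \in selM h1.
End SamplingGreedy.

(* Main.v *)
Require Import Defs.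
From mathcomp Require Import all_boot all_order all_algebra.
From mathcomp Require Import reals sequences exp.
From mathcomp Require Import ring lra zify.
Import Order.TTheory GRing.Theory Num.Theory.
Local Open Scope ring_scope.
Set Implicit Arguments. Unset Strict Implicit. Unset Printing Implicit Defensive.

Section Generic.
Variables (R : realType) (U : finType).
Definition submodU (g : {set U} -> R) : Prop :=
  forall (A A' : {set U}) (x : U), A \subset A' -> x \notin A' ->
    g (x |: A') - g A' <= g (x |: A) - g A.

Lemma card_ind (P : {set U} -> Prop) :
  (forall O : {set U}, (forall O' : {set U}, (#|O'| < #|O|)%N -> P O') -> P O) -> forall O, P O.
Proof.
move=> H O; move: {2}#|O| (leqnn #|O|) => n; elim: n O => [|n IH] O hO.
  by apply: H => O'; rewrite leqn0 in hO; rewrite (eqP hO).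
apply: H => O' hO'; apply: IH; rewrite -ltnS; exact: leq_trans hO' hO.
Qed.

Lemma telescope_Delta g (A O : {set U}) : submodU g ->
  g (A :|: O) - g A <= \sum_(o in O) (g (o |: A) - g A).
Proof.
move=> sg; elim/card_ind: O => O IH.
have [->|[o oO]] := set_0Vmem O.
  by rewrite setU0 big_set0 subrr.
rewrite (bigD1 o oO) /=.
have hc : (#|O :\ o| < #|O|)%N by rewrite (cardsD1 o O) oO.
have := IH _ hc; rewrite (eq_bigl (fun x => x \in O :\ o)); last first.
  by move=> x; rewrite !inE andbC.
move=> ih.
suff: g (A :|: O) - g (A :|: (O :\ o)) <= g (o |: A) - g A by lra.
have eqU : A :|: O = o |: (A :|: (O :\ o)).
  apply/setP => z; rewrite !inE; case: (z =P o) => [->|]; rewrite ?oO ?orbT //.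
case: (boolP (o \in A)) => oA.
  have -> : o |: A = A by apply/setP => z; rewrite !inE; case: (z =P o) => // ->.
  have -> : A :|: O = A :|: (O :\ o).
    rewrite eqU; apply/setP => z; rewrite !inE; case: (z =P o) => // ->; by rewrite oA.
  by rewrite !subrr.
rewrite eqU; apply: sg; first exact: subsetUl.
by rewrite !inE negb_or oA eqxx.
Qed.

Lemma exchange_lemma g (A O Y : {set U}) (N : U -> R) : submodU g ->
  [disjoint O & A] -> Y \subset A -> #|Y| = #|O| ->
  (forall o y, o \in O -> y \in A -> g (o |: (A :\ y)) - g A <= N o) ->
  g (A :|: O) - g A - (g A - g (A :\: Y)) <= \sum_(o in O) N o.
Proof.
move=> sg; elim/card_ind: O Y => O IH Y dOA YA cYO HN.
have [O0|[o oO]] := set_0Vmem O.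
  move: cYO; rewrite O0 cards0 => /eqP; rewrite cards_eq0 => /eqP ->.
  by rewrite big_set0 setU0 setD0 !subrr.
have [Y0|[y yY]] := set_0Vmem Y.
  have : #|O| == 0%N by rewrite -cYO Y0 cards0.
  by rewrite cards_eq0 => /eqP O0; rewrite O0 inE in oO.
have yA : y \in A by apply: (subsetP YA).
have oA : o \notin A by rewrite (disjointFr dOA oO).
rewrite (bigD1 o oO) /=.
have hc : (#|O :\ o| < #|O|)%N by rewrite (cardsD1 o O) oO.
rewrite (eq_bigl (fun x => x \in O :\ o)); last by move=> x; rewrite !inE andbC.
have d' : [disjoint O :\ o & A].
  by apply: disjointWl dOA; apply: subD1set.
have Y'A : Y :\ y \subset A by apply: subset_trans YA; apply: subD1set.
have cY' : #|Y :\ y| = #|O :\ o|.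
  by have := cYO; rewrite (cardsD1 y Y) (cardsD1 o O) yY oO /=; lia.
have ih := IH _ hc (Y :\ y) d' Y'A cY'
  (fun o' y' ho' hy' => HN o' y' (subsetP (subD1set O o) _ ho') hy').
have ho := HN o y oO yA.
have s1 : g (A :|: O) - g (A :|: (O :\ o)) <= g (o |: (A :\ y)) - g (A :\ y).
  have eqU : A :|: O = o |: (A :|: (O :\ o)).
    apply/setP => z; rewrite !inE; case: (z =P o) => [->|]; rewrite ?oO ?orbT //.
  rewrite eqU; apply: sg.
    by apply/subsetP => z; rewrite !inE => /andP[_ ->].
  by rewrite !inE negb_or (negbTE oA) eqxx.
have s2 : g A - g (A :\ y) <= g (A :\: (Y :\ y)) - g (A :\: Y).
  have e1 : A = y |: (A :\ y).
    apply/setP => z; rewrite !inE; case: (z =P y) => // ->; by rewrite yA.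
  have e2 : A :\: (Y :\ y) = y |: (A :\: Y).
    apply/setP => z; rewrite !inE; case: (z =P y) => [->|]; by rewrite ?yA ?yY.
  rewrite e2 {1}e1; apply: sg; last by rewrite !inE eqxx.
  apply/subsetP => z; rewrite !inE => /andP[zY ->]; rewrite andbT.
  by apply: contraNneq zY => ->.
lra.
Qed.
End Generic.
Section FMV.
Variables (R : realType) (U : finType) (H : Type) (Ex : (H -> R) -> R).
Hypothesis Ex_le : forall phi psi, (forall h, phi h <= psi h) -> Ex phi <= Ex psi.
Hypothesis Ex_add : forall phi psi, Ex (fun h => phi h + psi h) = Ex phi + Ex psi.
Hypothesis Ex_scale : forall c phi, Ex (fun h => c * phi h) = c * Ex phi.
Hypothesis Ex_const : forall c, Ex (fun _ => c) = c.

Lemma exists_min (U0 : {set U}) (pr : U -> R) u0 : u0 \in U0 ->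
  exists2 u, u \in U0 & forall v, v \in U0 -> pr u <= pr v.
Proof.
move=> u0U; case: (@arg_minP _ R U u0 (fun v => v \in U0) pr u0U) => u uU umin.
by exists u.
Qed.

Lemma fmv (Psi : {set U} -> R) : submodU Psi -> (forall A, 0 <= Psi A) ->
  forall (U0 : {set U}) (X : H -> {set U}) (c d : R),
  (forall h, X h \subset U0) ->
  (forall u, u \in U0 -> Ex (fun h => (u \in X h)%:R) <= c) ->
  (forall u, u \in U0 -> d <= Ex (fun h => (u \in X h)%:R)) -> d <= c ->
  (1 - c) * Psi set0 + d * Psi U0 <= Ex (fun h => Psi (X h)).
Proof.
move=> sP nP U0; elim/card_ind: U0 => U0 IH X c d XU hc hd dc.
have [U00|[u0 u0U]] := set_0Vmem U0.
  have eX : forall h, X h = set0.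
    by move=> h; apply/eqP; rewrite -subset0 -U00.
  have -> : Ex (fun h => Psi (X h)) = Psi set0.
    rewrite -[RHS]Ex_const; apply/le_anti/andP; split; apply: Ex_le => h; by rewrite eX.
  rewrite U00.
  have := nP set0; have : 0 <= (c - d) * Psi set0 by rewrite mulr_ge0 // subr_ge0.
  lra.
pose pr u := Ex (fun h => (u \in X h)%:R).
have [u uU umin] := exists_min pr u0U.
have hc' : (#|U0 :\ u| < #|U0|)%N by rewrite (cardsD1 u U0) uU.
have ih := IH _ hc' (fun h => X h :\ u) c (pr u).
have ih' : (1 - c) * Psi set0 + pr u * Psi (U0 :\ u) <= Ex (fun h => Psi (X h :\ u)).
  apply: ih.
  - by move=> h; apply: setSD.
  - move=> v; rewrite !inE => /andP[vu vU]; apply: le_trans (hc v vU).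
    by apply: Ex_le => h; rewrite !inE vu.
  - move=> v; rewrite !inE => /andP[vu vU]; apply: le_trans (umin v vU) _.
    by apply: Ex_le => h; rewrite !inE vu.
  - exact: hc.
have pt : forall h, Psi (X h :\ u) + (u \in X h)%:R * (Psi U0 - Psi (U0 :\ u)) <= Psi (X h).
  move=> h; case: (boolP (u \in X h)) => uX; last first.
    rewrite mul0r addr0; have -> : X h :\ u = X h; last by [].
    apply/setP => z; rewrite !inE; case: (z =P u) => // ->; by rewrite (negbTE uX).
  rewrite mul1r.
  have e1 : U0 = u |: (U0 :\ u).
    apply/setP => z; rewrite !inE; case: (z =P u) => // ->; by rewrite uU.
  have e2 : X h = u |: (X h :\ u).
    apply/setP => z; rewrite !inE; case: (z =P u) => // ->; by rewrite uX.
  have := sP (X h :\ u) (U0 :\ u) u (setSD _ (XU h)).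
  rewrite !inE eqxx /= => /(_ isT); rewrite -e1 -e2; lra.
have hE : Ex (fun h => Psi (X h :\ u)) + pr u * (Psi U0 - Psi (U0 :\ u)) <= Ex (fun h => Psi (X h)).
  rewrite mulrC -Ex_scale -Ex_add; apply: Ex_le => h; rewrite mulrC; exact: pt.
have : d * Psi U0 <= pr u * Psi U0 by rewrite ler_wpM2r // hd.
lra.
Qed.
End FMV.
Section Generic3.
Variables (R : realType) (U : finType).
Lemma sum_sub (A B : {set U}) (F : U -> R) : A \subset B -> (forall i, 0 <= F i) ->
  \sum_(i in A) F i <= \sum_(i in B) F i.
Proof.
move=> AB F0; rewrite [X in _ <= X](big_setID A) /=.
have -> : B :&: A = A by apply/setIidPr.
by rewrite lerDl sumr_ge0.
Qed.

Lemma exists_between (S A : {set U}) d : S \subset A -> (#|S| + d <= #|A|)%N ->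
  exists Y : {set U}, [/\ S \subset Y, Y \subset A & #|Y| = #|S| + d]%N.
Proof.
move=> SA; elim: d => [|d IH] hn; first by exists S; rewrite addn0.
have [Y [SY YA cY]] : exists Y : {set U}, [/\ S \subset Y, Y \subset A & #|Y| = #|S| + d]%N.
  by apply: IH; apply: leq_trans hn; rewrite leq_add2l.
have : Y \proper A by rewrite properEcard YA cY -addnS.
case/properP => _ [x xA xY].
exists (x |: Y); split.
- exact: subset_trans SY (subsetUr _ _).
- by rewrite subUset sub1set xA.
- by rewrite cardsU1 xY cY add1n addnS.
Qed.
End Generic3.
Lemma exp_bound (R : realType) (n : nat) :
  (expR (1 : R))^-1 <= (1 - (n.+1%:R : R)^-1) ^+ n.
Proof.
have e1 : (1 : R) + 1 <= expR 1 := expR_ge1Dx 1.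
case: n => [|n].
  rewrite expr0 invf_le1 //; [lra | exact: expR_gt0].
set N : R := n.+1%:R.
have N0 : 0 < N by rewrite ltr0n.
have eN : (n.+2%:R : R) = N + 1 by rewrite -addn1 natrD.
rewrite eN.
set q := 1 - (N + 1)^-1.
set E := expR (N^-1).
have q0 : 0 <= q.
  rewrite /q subr_ge0 invf_le1; lra.
have hE : 1 + N^-1 <= E := expR_ge1Dx _.
have eq1 : (1 + N^-1) * q = 1.
  rewrite /q; field; apply/andP; split; rewrite ?lt0r_neq0 //; lra.
have Eq : 1 <= E * q.
  by rewrite -eq1 ler_wpM2r.
have eE : expR 1 = E ^+ n.+1.
  by rewrite /E -expRM_natl -/N mulfV // lt0r_neq0.
rewrite eE -div1r ler_pdivrMr; last by apply: exprn_gt0; exact: expR_gt0.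
by rewrite mulrC -exprMn; apply: exprn_ege1.
Qed.
Section Main.
Variables (R : realType) (T : finType) (m k l : nat) (f : 'I_m -> {set T} -> R)
  (ord : seq (Tp T l)) (selM : seq (Tp T l) -> {set Tp T l})
  (selY : seq (Tp T l) -> 'I_m -> Tp T l).
Hypotheses (k1 : (1 <= k)%N) (l1 : (1 <= l)%N)
  (fsub : forall i, submodular (f i)) (fnn : forall i, nonneg_fun (f i))
  (vM : valid_selM k f ord selM selY) (vY : valid_selY k f ord selY).
Local Notation TP := (Tp T l).
Local Notation TS := (Tstate k f ord selY).

Lemma ext_submod i : submodU (@ext R T l (f i)).
Proof.
move=> A A' x sAA' xA'; rewrite /ext.
case: x xA' => [t|j] xA'; last first.
  have e : forall B : {set TP}, [set x : T | inl x \in inr j |: B] = [set x : T | inl x \in B].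
    by move=> B; apply/setP => z; rewrite !inE.
  by rewrite !e !subrr.
have e : forall B : {set TP}, [set x : T | inl x \in inl t |: B] = t |: [set x : T | inl x \in B].
  by move=> B; apply/setP => z; rewrite !inE.
rewrite !e; apply: fsub.
  by apply/subsetP => z; rewrite !inE => /(subsetP sAA').
by rewrite inE.
Qed.

Lemma ext_nonneg i (A : {set TP}) : 0 <= ext (f i) A.
Proof. exact: fnn. Qed.

Lemma nabla_ge0 (g : {set TP} -> R) x A : 0 <= nabla g k x A.
Proof.
rewrite /nabla; case: (x \in A) => //; case: ifP => _.
  by rewrite le_max bigmax_ge_id.
exact: bigmax_ge_id.
Qed.

Lemma trim_prop (g : {set TP} -> R) s (A : {set TP}) :
  let B := foldl (fun (A : {set TP}) (x : TP) =>
     if (x \in A) && (g A - g (A :\ x) < 0) then A :\ x else A) A s in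
  B \subset A /\ g A <= g B.
Proof.
elim: s A => [|x s IH] A /=; first by split.
case: ifP => [/andP[_ hlt]|_]; last exact: IH.
have [h1 h2] := IH (A :\ x); split.
  exact: subset_trans h1 (subD1set _ _).
apply: le_trans h2; lra.
Qed.

Lemma trim_sub (g : {set TP} -> R) B : trim g ord B \subset B.
Proof. exact: (trim_prop g _ B).1. Qed.
Lemma trim_ge (g : {set TP} -> R) B : g B <= g (trim g ord B).
Proof. exact: (trim_prop g _ B).2. Qed.

Lemma run_rcons r hd Ts x :
  run k f ord selY hd Ts (rcons r x) = stepT k f ord selY (hd ++ rcons r x) x (run k f ord selY hd Ts r).
Proof.
elim: r hd Ts => [|y r IH] hd Ts /=; first by rewrite cats1.
by rewrite IH cat_rcons.
Qed.

Lemma TS_rcons h x : TS (rcons h x) = stepT k f ord selY (rcons h x) x (TS h).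
Proof. by rewrite /Tstate run_rcons. Qed.

Lemma nabla_le_max (g : {set TP} -> R) x (A : {set TP}) (M : R) :
  (forall y, y \in A -> nablaxy g x y A <= M) ->
  \big[Num.max/0]_(y in A) nablaxy g x y A <= Num.max 0 M.
Proof.
move=> H; apply: bigmax_le; first by rewrite le_max lexx.
by move=> y yA; rewrite le_max H ?orbT.
Qed.

Lemma pos_le_max0 (a b : R) : 0 < a -> a <= Num.max 0 b -> a <= b.
Proof. move=> ha; rewrite le_max => /orP[h|//]; by move: (lt_le_trans ha h); rewrite ltxx. Qed.

Lemma step_facts h x (i : 'I_m) :
  let A := TS h i in let B := TS (rcons h x) i in
  [/\ ext (f i) A + nabla (ext (f i)) k x A <= ext (f i) B,
      (#|A| <= k -> #|B| <= k)%N &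
      B \subset x |: A].
Proof.
move=> A B.
have -> : B = stepT k f ord selY (rcons h x) x (TS h) i by rewrite /B TS_rcons.
rewrite /stepT -/A.
set g := ext (f i).
case: ifP => [npos|nneg]; last first.
  split => //; last exact: subsetUr.
  by move/negbT: nneg; rewrite -leNgt => ?; lra.
have xA : x \notin A by apply: contraTN npos; rewrite /nabla => ->; rewrite ltxx.
case: ifP => rc.
  have [yA ymax] := vY rc.
  set y := selY (rcons h x) i.
  have nle : nabla g k x A <= nablaxy g x y A.
    have hm := nabla_le_max ymax.
    have : nabla g k x A <= Num.max 0 (nablaxy g x y A).
      rewrite /nabla (negbTE xA); case: ifP => // kAlt.
      rewrite ge_max hm andTb.
      move: rc; rewrite /rep_cond npos /= => /orP[kA|/existsP[z /andP[zA hz]]].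
        by move: kAlt; rewrite ltnNge kA.
      by rewrite le_max (le_trans hz (ymax z zA)) orbT.
    exact: pos_le_max0.
  split.
  - apply: le_trans (trim_ge _ _); rewrite -/g.
    by move: nle; rewrite /nablaxy; lra.
  - move=> kA; apply: leq_trans (subset_leq_card (trim_sub _ _)) _.
    rewrite cardsU1 (cardsD1 y A) yA in kA *.
    by case: (x \in _); rewrite ?add1n ?add0n // ltnW.
  - apply: subset_trans (trim_sub _ _) _; apply: setUS; exact: subsetDl.
have nrc : ~~ rep_cond g k x A by rewrite rc.
move: nrc; rewrite /rep_cond npos /= negb_or -ltnNge => /andP[kA /existsPn nex].
have nle : nabla g k x A <= Delta g x A.
  have hm : \big[Num.max/0]_(y in A) nablaxy g x y A <= Num.max 0 (Delta g x A).
    apply: nabla_le_max => y yA; move: (nex y); rewrite yA /= -ltNge; exact: ltW.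
  have : nabla g k x A <= Num.max 0 (Delta g x A).
    rewrite /nabla (negbTE xA) kA ge_max hm /= le_max lexx orbT //.
  exact: pos_le_max0.
rewrite setD0; split.
- by apply: le_trans (trim_ge _ _); move: nle; rewrite /Delta; lra.
- by move=> _; apply: leq_trans (subset_leq_card (trim_sub _ _)) _; rewrite cardsU1 (negbTE xA).
- exact: trim_sub.
Qed.
Lemma inl_inj : injective (@inl T 'I_l).
Proof. by move=> a b []. Qed.

Lemma TS_inv h i : (#|TS h i| <= k)%N /\ TS h i \subset [set y | y \in h].
Proof.
elim/last_ind: h i => [|h x IH] i.
  by rewrite /Tstate /= cards0 sub0set.
have [_ hk hs] := step_facts h x i.
have [IH1 IH2] := IH i; split; first exact: hk.
apply: subset_trans hs _; apply/subsetP => z; rewrite !inE mem_rcons inE.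
case/orP => [->//|zA]; by have := subsetP IH2 z zA; rewrite inE => ->; rewrite orbT.
Qed.

Definition Phi h := \sum_(i < m) ext (f i) (TS h i).

Lemma card_inl_pre (A : {set TP}) : (#|[set t : T | inl t \in A]| <= #|A|)%N.
Proof.
rewrite -(card_imset _ inl_inj); apply: subset_leq_card.
by apply/subsetP => z /imsetP[t]; rewrite inE => ? ->.
Qed.

Lemma Phi_le_Fobj h : Phi h <= Fobj k f (outset h).
Proof.
apply: ler_sum => i _; rewrite /ext.
apply: le_bigmax_cond.
have [c s] := TS_inv h i; apply/andP; split.
  apply/subsetP => t; rewrite !inE => ht; by have := subsetP s _ ht; rewrite inE.
exact: leq_trans (card_inl_pre _) c.
Qed.

Lemma card_outset (h : seq TP) : (#|outset h| <= size h)%N.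
Proof.
rewrite -(card_imset _ inl_inj); apply: leq_trans (card_size h).
by apply: subset_leq_card; apply/subsetP => z /imsetP[t]; rewrite inE => ? ->.
Qed.

Lemma Fobj_ge0 S : 0 <= Fobj k f S.
Proof. by apply: sumr_ge0 => i _; apply: bigmax_ge_id. Qed.

Lemma exchange_nabla (g : {set TP} -> R) (A O : {set TP}) :
  submodU g -> (forall B, 0 <= g B) -> (#|O| <= k)%N ->
  g (A :|: O) - 2 * g A <= \sum_(x in O) nabla g k x A.
Proof.
move=> sg g0 cO.
set O' := O :\: A.
have eU : A :|: O = A :|: O'.
  apply/setP => z; rewrite !inE; by case: (z \in A); rewrite ?orbT.
have le1 : \sum_(x in O') nabla g k x A <= \sum_(x in O) nabla g k x A.
  by apply: sum_sub; [apply: subsetDl | move=> ?; apply: nabla_ge0].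
apply: le_trans le1; rewrite eU.
have gA := g0 A.
case: (ltnP #|A| k) => kA.
  have := telescope_Delta A O' sg.
  have : \sum_(o in O') (g (o |: A) - g A) <= \sum_(x in O') nabla g k x A.
    apply: ler_sum => x; rewrite inE => /andP[xA _].
    by rewrite /nabla (negbTE xA) kA le_max /Delta lexx orbT.
  lra.
have cO' : (#|O'| <= #|A|)%N.
  apply: leq_trans (leq_trans cO kA); apply: subset_leq_card; exact: subsetDl.
have [Y [_ YA cY]] : exists Y : {set TP}, [/\ set0 \subset Y, Y \subset A & #|Y| = #|(set0 : {set TP})| + #|O'|]%N.
  by apply: exists_between; rewrite ?sub0set ?cards0.
rewrite cards0 add0n in cY.
have := @exchange_lemma R _ g A O' Y (fun x => nabla g k x A) sg _ YA cY.
have gY := g0 (A :\: Y).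
move=> H; suff : g (A :|: O') - g A - (g A - g (A :\: Y)) <= \sum_(o in O') nabla g k o A by lra.
apply: H.
  rewrite -setI_eq0; apply/eqP/setP => z; rewrite /O' !inE.
  by case: (z \in A); rewrite ?andbF.
move=> o y; rewrite inE => /andP[oA _] yA.
rewrite /nabla (negbTE oA) ltnNge kA /=.
by apply: le_bigmax_cond.
Qed.

Let r : R := (l%:R)^-1.
Let q : R := 1 - r.
Lemma lR0 : (l%:R : R) != 0. Proof. by rewrite pnatr_eq0 -lt0n. Qed.
Lemma r_ge0 : 0 <= r. Proof. by rewrite /r invr_ge0 ler0n. Qed.
Lemma rl : r * l%:R = 1. Proof. by rewrite /r mulVf ?lR0. Qed.
Lemma r_le1 : r <= 1.
Proof. by rewrite /r invf_le1 ?ler1n ?ltr0n. Qed.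
Lemma q_ge0 : 0 <= q. Proof. by rewrite /q subr_ge0 r_le1. Qed.
Lemma q_le1 : q <= 1. Proof. by rewrite /q lerBlDr lerDl r_ge0. Qed.

Fixpoint Ex (t : nat) (phi : seq TP -> R) (h : seq TP) : R :=
  if t is t'.+1 then r * \sum_(x in selM h) Ex t' phi (rcons h x) else phi h.

Lemma Ex_le t phi psi h : (forall h, phi h <= psi h) -> Ex t phi h <= Ex t psi h.
Proof.
move=> H; elim: t h => [|t IH] h /=; first exact: H.
by apply: ler_wpM2l; [exact: r_ge0 | apply: ler_sum => x _; exact: IH].
Qed.

Lemma Ex_add t phi psi h : Ex t (fun h => phi h + psi h) h = Ex t phi h + Ex t psi h.
Proof.
elim: t h => [|t IH] h //=.
by rewrite -mulrDr -big_split /=; congr (_ * _); apply: eq_bigr => x _; exact: IH.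
Qed.

Lemma Ex_scale t c phi h : Ex t (fun h => c * phi h) h = c * Ex t phi h.
Proof.
elim: t h => [|t IH] h //=.
rewrite (eq_bigr (fun x => c * Ex t phi (rcons h x))); last by move=> x _; exact: IH.
by rewrite -mulr_sumr mulrCA.
Qed.

Lemma card_selM h : #|selM h| = l. Proof. exact: (vM h).1. Qed.

Lemma Ex_const t c h : Ex t (fun _ => c) h = c.
Proof.
elim: t h => [|t IH] h //=.
rewrite (eq_bigr (fun _ => c)); last by move=> x _; exact: IH.
by rewrite sumr_const card_selM -mulr_natl mulrA rl mul1r.
Qed.

Lemma Ex_sum t (F : 'I_m -> seq TP -> R) h :
  Ex t (fun h => \sum_(i < m) F i h) h = \sum_(i < m) Ex t (F i) h.
Proof.
elim: t h => [|t IH] h //=.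
rewrite (eq_bigr (fun x => \sum_(i < m) Ex t (F i) (rcons h x))); last by move=> x _; exact: IH.
rewrite exchange_big /= mulr_sumr; done.
Qed.

Lemma Ex_tower t phi h :
  Ex t.+1 phi h = Ex t (fun h' => r * \sum_(x in selM h') phi (rcons h' x)) h.
Proof.
elim: t h => [|t IH] h; first by [].
transitivity (r * \sum_(x in selM h) Ex t.+1 phi (rcons h x)); first by [].
rewrite [RHS]/=; congr (_ * _); apply: eq_bigr => x _; exact: IH.
Qed.

Lemma Eval_Ex t h : Eval k f selM t h = Ex t (fun h => Fobj k f (outset h)) h.
Proof.
elim: t h => [|t IH] h //=.
by congr (_ * _); apply: eq_bigr => x _; rewrite IH.
Qed.

Lemma Ex_mem t u h0 : Ex t (fun h => (u \in h)%:R) h0 <= 1 - q ^+ t * (1 - (u \in h0)%:R).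
Proof.
elim: t h0 => [|t IH] h0 /=; first by rewrite expr0 mul1r; lra.
have Q0 : 0 <= q ^+ t by apply: exprn_ge0; exact: q_ge0.
case: (boolP (u \in h0)) => uh.
  rewrite subrr mulr0 subr0.
  have : \sum_(x in selM h0) Ex t (fun h => (u \in h)%:R) (rcons h0 x) <= \sum_(x in selM h0) 1.
    apply: ler_sum => x _; apply: le_trans (IH _) _.
    by rewrite mem_rcons inE uh orbT subrr mulr0 subr0.
  rewrite sumr_const card_selM => H.
  apply: le_trans (ler_wpM2l r_ge0 H) _.
  by rewrite -mulr_natr mul1r rl.
rewrite subr0 mulr1.
have H : \sum_(x in selM h0) Ex t (fun h => (u \in h)%:R) (rcons h0 x) <=
         \sum_(x in selM h0) ((1 - q ^+ t) + q ^+ t * (u == x)%:R).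
  apply: ler_sum => x _; apply: le_trans (IH _) _.
  rewrite mem_rcons inE (negbTE uh) orbF; lra.
rewrite big_split /= sumr_const card_selM -mulr_sumr in H.
set s := \sum_(x in selM h0) (u == x)%:R in H.
have s1 : s <= 1.
  rewrite /s; case: (boolP (u \in selM h0)) => uM.
    rewrite (bigD1 u uM) eqxx /= big1 ?addr0 // => x /andP[_ xu].
    by rewrite eq_sym (negbTE xu).
  rewrite big1 // => x xM; case: (u =P x) => // ux; by rewrite ux xM in uM.
apply: le_trans (ler_wpM2l r_ge0 H) _.
have e1 : r * ((1 - q ^+ t) *+ l) = 1 - q ^+ t by rewrite -mulr_natr mulrCA rl mulr1.
have e2 : r * q ^+ t * s <= r * q ^+ t.
  by rewrite -{2}[r * _]mulr1 ler_wpM2l // mulr_ge0 // r_ge0.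
rewrite mulrDr e1 exprS /q mulrA; rewrite /q in e2.
have : r * (1 - r) ^+ t * s = r * ((1 - r) ^+ t * s) by rewrite mulrA.
lra.
Qed.

Lemma Phi_step h x : Phi h + \sum_(i < m) nabla (ext (f i)) k x (TS h i) <= Phi (rcons h x).
Proof.
rewrite /Phi -big_split; apply: ler_sum => i _.
by have [H _ _] := step_facts h x i.
Qed.

Definition psi h := r * \sum_(x in selM h) Phi (rcons h x).

Lemma psi_ge h : Phi h + r * gain k f ord selY h (selM h) <= psi h.
Proof.
rewrite /psi /gain.
have H : \sum_(x in selM h) (Phi h + \sum_(i < m) nabla (ext (f i)) k x (TS h i))
   <= \sum_(x in selM h) Phi (rcons h x).
  by apply: ler_sum => x _; apply: Phi_step.
apply: le_trans (ler_wpM2l r_ge0 H); rewrite big_split /= sumr_const card_selM.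
by rewrite mulrDr -mulr_natr mulrCA rl mulr1.
Qed.

Lemma gain_ge0 h M : 0 <= gain k f ord selY h M.
Proof. by apply: sumr_ge0 => x _; apply: sumr_ge0 => i _; apply: nabla_ge0. Qed.

Lemma psi_ge0 h : Phi h <= psi h.
Proof.
apply: le_trans (psi_ge h); rewrite lerDl; apply: mulr_ge0; [exact: r_ge0|exact: gain_ge0].
Qed.

Lemma card_TP : #|{: TP}| = (#|T| + l)%N.
Proof. by rewrite card_sum card_ord. Qed.

Lemma gain_lower h (O : {set T}) (Os : 'I_m -> {set T}) : (#|O| <= l)%N ->
  (forall i, Os i \subset O /\ (#|Os i| <= k)%N) ->
  \sum_(i < m) (ext (f i) (TS h i :|: inl @: Os i) - 2 * ext (f i) (TS h i))
    <= gain k f ord selY h (selM h).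
Proof.
move=> cO HOs.
have HH : exists Y : {set TP},
    [/\ @inl T 'I_l @: O \subset Y, Y \subset setT & #|Y| = #|@inl T 'I_l @: O| + (l - #|O|)]%N.
  apply: (@exists_between _ (@inl T 'I_l @: O) setT (l - #|O|)%N (subsetT _)).
  rewrite cardsT card_TP (card_imset _ inl_inj).
  rewrite subnKC //; exact: leq_addl.
case: HH => O2 [sO2 _ cO2].
rewrite (card_imset _ inl_inj) subnKC // in cO2.
apply: le_trans (proj2 (vM h) O2 cO2).
rewrite /gain exchange_big /=; apply: ler_sum => i _.
have [Oi ci] := HOs i.
apply: le_trans (@exchange_nabla _ (TS h i) (@inl T 'I_l @: Os i) (ext_submod i) (ext_nonneg i) _) _.
  by rewrite (card_imset _ inl_inj).
apply: sum_sub; last by move=> x; apply: nabla_ge0.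
apply: subset_trans sO2; exact: imsetS.
Qed.

Lemma Psi_submod i (B : {set TP}) : submodU (fun A => ext (f i) (A :|: B)).
Proof.
move=> A A' x sAA' xA' /=.
case: (boolP (x \in B)) => xB.
  have e : forall C : {set TP}, x |: C :|: B = C :|: B.
    by move=> C; apply/setP => z; rewrite !inE; case: (z =P x) => [->|]; rewrite ?xB ?orbT.
  by rewrite !e !subrr.
have e : forall C : {set TP}, x |: C :|: B = x |: (C :|: B).
  by move=> C; apply/setP => z; rewrite !inE orbA.
rewrite !e; apply: ext_submod; first exact: setSU.
by rewrite !inE negb_or xA' xB.
Qed.

Lemma Ex_Psi t i (B : {set TP}) :
  q ^+ t * ext (f i) B <= Ex t (fun h => ext (f i) (TS h i :|: B)) [::].
Proof.
have Q1 : q ^+ t <= 1 by apply: exprn_ile1; [exact: q_ge0|exact: q_le1].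
have := @fmv R TP (seq TP) (fun phi => Ex t phi [::])
  (fun phi psi H => Ex_le t [::] H) (fun phi psi => Ex_add t phi psi [::])
  (fun c phi => Ex_scale t c phi [::]) (fun c => Ex_const t c [::])
  (fun A => ext (f i) (A :|: B)) (Psi_submod i B) (fun A => ext_nonneg i _)
  setT (fun h => TS h i) (1 - q ^+ t) 0.
have -> : 1 - (1 - q ^+ t) = q ^+ t by ring.
rewrite set0U mul0r addr0; apply.
- by move=> h; apply: subsetT.
- move=> u _; have H1 := Ex_mem t u [::]; rewrite in_nil subr0 mulr1 in H1.
  apply: le_trans H1; apply: Ex_le => h; case: (boolP (u \in TS h i)) => // uT.
  by have := subsetP (TS_inv h i).2 u uT; rewrite inE => ->.
- move=> u _; rewrite -(Ex_const t 0 [::]); by apply: Ex_le => h; rewrite ler0n.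
- by rewrite subr_ge0.
Qed.

Definition a t := Ex t Phi [::].

Lemma a_mono t : a t <= a t.+1.
Proof. by rewrite /a Ex_tower; apply: Ex_le => h; apply: psi_ge0. Qed.

Lemma ext_inl i (S : {set T}) : ext (f i) (@inl T 'I_l @: S) = f i S.
Proof.
rewrite /ext; congr (f i _); apply/setP => z; by rewrite inE (mem_imset _ _ inl_inj).
Qed.

Lemma a_rec t (O : {set T}) (Os : 'I_m -> {set T}) : (#|O| <= l)%N ->
  (forall i, Os i \subset O /\ (#|Os i| <= k)%N) ->
  (1 - 2 * r) * a t + r * (q ^+ t * \sum_(i < m) f i (Os i)) <= a t.+1.
Proof.
move=> cO HOs.
pose Ps h := \sum_(i < m) ext (f i) (TS h i :|: inl @: Os i).
have pt : forall h, (1 - 2 * r) * Phi h + r * Ps h <= psi h.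
  move=> h; apply: le_trans (psi_ge h).
  have := ler_wpM2l r_ge0 (gain_lower h cO HOs).
  rewrite sumrB -mulr_sumr /Ps -/(Phi h); lra.
have := Ex_le t [::] pt.
rewrite Ex_add Ex_scale Ex_scale -/(a t) -Ex_tower -/(a t.+1) => H.
apply: le_trans H; rewrite lerD2l; apply: ler_wpM2l; first exact: r_ge0.
rewrite /Ps Ex_sum mulr_sumr; apply: ler_sum => i _.
by rewrite -(ext_inl i); apply: Ex_Psi.
Qed.

Definition dd (t : nat) : R := t%:R * r / 2 * q ^+ t.-1.

Lemma d_step t : (t.+1 <= l)%N -> dd t.+1 <= (1 - 2 * r) * dd t + r * q ^+ t.
Proof.
move=> tl; rewrite /dd.
case: t tl => [|s] tl /=.
  rewrite expr0 !mulr1 !mul0r mulr0 add0r mul1r.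
  have := r_ge0; lra.
have Q0 : 0 <= q ^+ s by apply: exprn_ge0; exact: q_ge0.
set Q := q ^+ s.
have eS : (s.+2%:R : R) = s%:R + 2 by rewrite -addn2 natrD.
have eS1 : (s.+1%:R : R) = s%:R + 1 by rewrite -addn1 natrD.
have rs : r * (s%:R + 2) <= 1.
  have : r * (s%:R + 2) <= r * l%:R by apply: ler_wpM2l; [exact: r_ge0 | rewrite -eS ler_nat].
  by rewrite rl.
have key : 0 <= r * Q * (1 - r * (s%:R + 2)) by rewrite mulr_ge0 ?mulr_ge0 ?r_ge0 // subr_ge0.
rewrite eS eS1 exprS -/Q /q.
have E : (1 - 2 * r) * ((s%:R + 1) * r / 2 * Q) + r * ((1 - r) * Q) -
         (s%:R + 2) * r / 2 * ((1 - r) * Q) = r * Q * (1 - r * (s%:R + 2)) / 2.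
  by field.
have : 0 <= r * Q * (1 - r * (s%:R + 2)) / 2 by rewrite divr_ge0.
lra.
Qed.

Lemma a0_ge0 : 0 <= a 0.
Proof. by apply: sumr_ge0 => i _; apply: ext_nonneg. Qed.

Lemma a_bound (O : {set T}) (Os : 'I_m -> {set T}) : (#|O| <= l)%N ->
  (forall i, Os i \subset O /\ (#|Os i| <= k)%N) ->
  forall t, (t <= l)%N -> dd t * \sum_(i < m) f i (Os i) <= a t.
Proof.
move=> cO HOs.
have F0 : 0 <= \sum_(i < m) f i (Os i) by apply: sumr_ge0 => i _; apply: fnn.
set F := \sum_(i < m) f i (Os i) in F0 *.
elim => [|t IH] tl.
  by rewrite /dd mul0r !mul0r a0_ge0.
have IH' := IH (ltnW tl).
have h1 := a_mono t.
have h2 := a_rec t cO HOs; rewrite -/F in h2.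
have ds := d_step tl.
case: (ltngtP l 1) => hl.
- by move: hl; rewrite ltnS leqn0 => /eqP l0; move: l1; rewrite l0.
- have r2 : r <= 2^-1.
    rewrite /r lef_pV2 ?posrE ?ltr0n ?(ltnW hl) //.
    by rewrite ler_nat.
  have c0 : 0 <= 1 - 2 * r by lra.
  have h3 : (1 - 2 * r) * (dd t * F) <= (1 - 2 * r) * a t by apply: ler_wpM2l.
  have h4 : dd t.+1 * F <= ((1 - 2 * r) * dd t + r * q ^+ t) * F by apply: ler_wpM2r.
  move: h4; rewrite mulrDl -mulrA -mulrA; lra.
- have t0 : t = 0%N by move: tl; rewrite hl ltnS leqn0 => /eqP.
  have r1 : r = 1 by rewrite /r hl invr1.
  clear IH; move: h1 h2 IH'; rewrite /dd t0 r1 /= !expr0 !mul1r !mulr1 !mul0r; lra.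
Qed.

Lemma main_bound (O : {set T}) : (#|O| <= l)%N ->
  (2 * expR 1)^-1 * Fobj k f O <= Eval k f selM l [::].
Proof.
move=> cO.
pose Os i := Order.arg_max (set0 : {set T}) (fun A : {set T} => (A \subset O) && (#|A| <= k)%N) (f i).
have HF : Fobj k f O = \sum_(i < m) f i (Os i).
  apply: eq_bigr => i _; apply: bigmax_eq_arg; first by rewrite sub0set cards0.
  by move=> A _; exact: fnn.
have HOs : forall i, Os i \subset O /\ (#|Os i| <= k)%N.
  move=> i; rewrite /Os; case: arg_maxP => [|A /andP[h1 h2] _]; last by split.
  by rewrite sub0set cards0.
have Hb := a_bound cO HOs (leqnn l).
have HE : a l <= Eval k f selM l [::].
  by rewrite Eval_Ex /a; apply: Ex_le => h; apply: Phi_le_Fobj.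
apply: le_trans HE; apply: le_trans Hb; rewrite -HF.
have F0 := Fobj_ge0 O.
have edd : dd l = 2^-1 * q ^+ l.-1 by rewrite /dd [_ * r]mulrC rl mul1r mulrC.
rewrite edd; apply: ler_wpM2r => //.
rewrite invfM; apply: ler_wpM2l; first by rewrite invr_ge0; lra.
have := exp_bound R l.-1; rewrite prednK //.
Qed.

End Main.

Theorem mainTheorem4 (R : realType) (T : finType) (m k l : nat)
  (f : 'I_m -> {set T} -> R)
  (ord : seq (Tp T l))
  (selM : seq (Tp T l) -> {set Tp T l})
  (selY : seq (Tp T l) -> 'I_m -> Tp T l) :
  (1 <= k)%N -> (1 <= l)%N ->
  (forall i, submodular (f i)) -> (forall i, nonneg_fun (f i)) ->
  uniq ord -> (forall x, x \in ord) ->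
  valid_selM k f ord selM selY -> valid_selY k f ord selY ->
  (forall h, size h = l -> reachable selM h -> (#|outset h| <= l)%N) /\
  (forall O : {set T}, (#|O| <= l)%N ->
     (forall S' : {set T}, (#|S'| <= l)%N -> Fobj k f S' <= Fobj k f O) ->
     (2 * expR 1)^-1 * Fobj k f O <= Eval k f selM l [::]).
Proof.
move=> k1 l1 fsub fnn _ _ vM vY; split.
  by move=> h sh _; apply: leq_trans (card_outset h) _; rewrite sh.
move=> O cO _; exact: (main_bound l1 fsub fnn vM vY cO).
Qed.
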